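(* Let $\tau\in\mathcal{L}$. Then $C(\tau)$ is closed in the Euclidean space $\mathbb{R}$, and moreover $C(\tau)$ is closed and meager in the space $(\mathbb{R},\tau)$.
   Context: $\eta$ denotes the Euclidean topology on $\mathbb{R}$. $\mathcal{L}$ denotes the family of all Hausdorff topologies $\tau$ on $\mathbb{R}$ with $\tau\subset\eta$. For $\tau\in\mathcal{L}$ and $a\in\mathbb{R}$ let $\mathcal{N}_\tau(a)$ be the neighborhood filter of $a$ in $(\mathbb{R},\tau)$; $C(\tau)$ is the set of all $a\in\mathbb{R}$ with $\mathcal{N}_\tau(a)\neq\mathcal{N}_\eta(a)$. *)

(* Defs.v *)
(* The Euclidean topology on R : realType is the
   library topology ([open], [closed], [nbhs]); coarser topologies tau are
   represented by their family of open sets. *)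
From HB Require Import structures.
From mathcomp Require Import all_boot all_order all_algebra.
From mathcomp Require Import all_classical all_reals all_analysis.
Set Implicit Arguments. Unset Strict Implicit. Unset Printing Implicit Defensive.
Import Order.TTheory GRing.Theory Num.Theory numFieldNormedType.Exports.
Local Open Scope classical_set_scope.

Section GenTop.
Variable T : Type.

Definition is_topology (O : set (set T)) : Prop :=
  [/\ O setT, O set0,
      (forall U V, O U -> O V -> O (U `&` V)) &
      (forall S : set (set T), S `<=` O -> O (\bigcup_(U in S) U))].

Definition hausdorff_top (O : set (set T)) : Prop :=
  forall x y : T, x <> y ->
    exists U V, [/\ O U, O V, U x, V y & U `&` V = set0].

Definition nbhs_top (O : set (set T)) (a : T) : set (set T) :=
  [set A | exists U, [/\ O U, U a & U `<=` A]].

Definition closed_top (O : set (set T)) (A : set T) : Prop := O (~` A).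

Definition closure_top (O : set (set T)) (A : set T) : set T :=
  [set x | forall U, O U -> U x -> U `&` A !=set0].

Definition interior_top (O : set (set T)) (A : set T) : set T :=
  [set x | exists U, [/\ O U, U x & U `<=` A]].

Definition nowhere_dense_top (O : set (set T)) (A : set T) : Prop :=
  interior_top O (closure_top O A) = set0.

Definition meager_top (O : set (set T)) (A : set T) : Prop :=
  exists F : nat -> set T,
    (forall n, nowhere_dense_top O (F n)) /\ A `<=` \bigcup_n F n.
End GenTop.

Definition in_L (R : realType) (tau : set (set R)) : Prop :=
  [/\ is_topology tau, hausdorff_top tau & (forall U, tau U -> open U)].

Definition Cset (R : realType) (tau : set (set R)) : set R :=
  [set a | nbhs_top tau a <> nbhs a].

(* Main.v *)
Require Import Defs.
From mathcomp Require Import all_boot all_order all_algebra.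
From mathcomp Require Import all_classical all_reals all_analysis.
From mathcomp Require Import lra.
Import numFieldNormedType.Exports.
Import Order.TTheory GRing.Theory Num.Theory.
Local Open Scope classical_set_scope.
Local Open Scope ring_scope.

Lemma compact_tau_closed (R : realType) (tau : set (set R)) (K : set R) :
  in_L tau -> compact K -> tau (~` K).
Proof.
case=> [[tT t0 tI tU] tH tO] cK.
have sep : forall x, ~ K x -> exists V, [/\ tau V, V x & V `&` K = set0].
  move=> x nKx; apply: contrapT => H.
  have ne : forall V, tau V -> V x -> V `&` K !=set0.
    by move=> V tV Vx; apply/set0P/eqP => h; apply: H; exists V.
  pose F := filter_from [set V | tau V /\ V x] (fun V => V `&` K).
  have FF : Filter F.
    apply: filter_from_filter; first by exists setT.
    move=> V W [tV Vx] [tW Wx]; exists (V `&` W); first by split; [exact: tI|].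
    by move=> y [[? ?] ?]; split; split.
  have PF : ProperFilter F.
    by apply: filter_from_proper => // V [tV Vx]; exact: ne.
  have FK : F K by exists setT => //; move=> y [].
  have [y [Ky cly]] := cK F PF FK.
  have xy : x <> y by move=> e; apply: nKx; rewrite e.
  have [U [W [tUU tW Ux Wy UW]]] := tH x y xy.
  have FU : F (U `&` K) by exists U.
  have nW : nbhs y W by apply: open_nbhs_nbhs; split => //; exact: tO.
  have [z [[Uz Kz] Wz]] := cly _ _ FU nW.
  have : (U `&` W) z by split.
  by rewrite UW.
have -> : ~` K = \bigcup_(V in [set V | tau V /\ V `&` K = set0]) V.
  apply/seteqP; split => x.
    by move=> /sep [V [tV Vx VK]]; exists V.
  case=> V [tV VK] Vx Kx.
  have : (V `&` K) x by split.
  by rewrite VK.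
by apply: tU => V [].
Qed.

Lemma itv_tau_closed (R : realType) (tau : set (set R)) (p q : R) :
  in_L tau -> tau (~` `[p, q]).
Proof. by move=> hL; apply: compact_tau_closed => //; exact: segment_compact. Qed.

Lemma bounded_notC (R : realType) (tau : set (set R)) (V : set R) (x p q : R) :
  in_L tau -> tau V -> V x -> V `<=` `[p, q] -> ~ Cset tau x.
Proof.
move=> hL tV Vx Vpq; case: (hL) => [[tT t0 tI tU] tH tO].
rewrite /Cset /=; suff -> : nbhs_top tau x = nbhs x by [].
apply/funext => A; apply/propext; split.
  case=> U [tUU Ux UA]; apply: (filterS UA).
  by apply: open_nbhs_nbhs; split => //; exact: tO.
move=> /nbhs_ballP [e /= e0 sub].
exists (V `&` ~` `[p, x - e / 2] `&` ~` `[x + e / 2, q]); split.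
- by apply: (tI); [apply: (tI) => //|]; exact: itv_tau_closed.
- split; [split => //|]; apply/negP; rewrite /= in_itv /= negb_and -!ltNge.
    by apply/orP; right; lra.
  by apply/orP; left; lra.
- move=> y [[Vy h1] h2]; apply: sub.
  have := Vpq y Vy; rewrite /= in_itv /= => /andP [py yq].
  move: h1 h2 => /negP h1 /negP h2.
  move: h1 h2; rewrite /= !in_itv /= py yq /= andbT -!ltNge => h1 h2.
  rewrite -ball_normE /ball_ /= ltr_norml; apply/andP; split; lra.
Qed.

Lemma notC_open (R : realType) (tau : set (set R)) :
  in_L tau -> tau (~` Cset tau).
Proof.
move=> hL; case: (hL) => [[tT t0 tI tU] tH tO].
have -> : ~` Cset tau =
  \bigcup_(V in [set V | tau V /\ exists p q, V `<=` `[p, q]]) V.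
  apply/seteqP; split => x.
    move=> nC; have eq : nbhs_top tau x = nbhs x by apply: contrapT.
    have : nbhs x `[x - 1, x + 1]%classic.
      apply/nbhs_ballP; exists 1 => //= y.
      rewrite -ball_normE /ball_ /= ltr_norml in_itv /= => /andP [h1 h2].
      by apply/andP; split; lra.
    rewrite -eq => -[U [tUU Ux Usub]].
    by exists U => //; split => //; exists (x - 1), (x + 1).
  by case=> V [tV [p [q Vpq]]] Vx; exact: (bounded_notC _ _ _ _ _ _ hL tV Vx Vpq).
by apply: tU => V [].
Qed.

Theorem proposition3 (R : realType) (tau : set (set R)) :
  in_L tau ->
  [/\ closed (Cset tau), closed_top tau (Cset tau) & meager_top tau (Cset tau)].
Proof.
move=> hL; have tC := notC_open _ _ hL; case: (hL) => [[tT t0 tI tU] tH tO].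
split.
- by rewrite -(setCK (Cset tau)); apply: open_closedC; exact: tO.
- exact: tC.
exists (fun n : nat => Cset tau `&` `[- (n%:R), n%:R]); split.
  move=> n; apply/seteqP; split => // x [U [tUU Ux Ucl]].
  have UF : U `<=` Cset tau `&` `[- (n%:R), n%:R].
    move=> y Uy; have cy := Ucl y Uy; split.
      apply: contrapT => nC.
      by have [z [nCz [Cz _]]] := cy _ tC nC.
    apply: contrapT => ny.
    by have [z [nz [_ iz]]] := cy _ (itv_tau_closed _ _ _ _ hL) ny.
  have := bounded_notC _ _ _ _ _ _ hL tUU Ux (fun y Uy => (UF y Uy).2).
  by have [] := UF x Ux.
move=> x Cx; exists (Num.truncn `|x|).+1 => //; split => //.
have := Num.Theory.truncnS_gt `|x|; rewrite /= in_itv /= => h.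
by rewrite -ler_norml; apply: ltW.
Qed.
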